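(* Let $(X,*,0)$ be a solid weak BCC-algebra. Then for all $x,y\in X$ belonging to the same branch, $x*(x*(x*y))=x*y$.
   Context: A weak BCC-algebra is a set $X$ with a binary operation $*$ and a constant $0$ satisfying, for all $x,y,z\in X$: (i) $((x*y)*(z*y))*(x*z)=0$; (ii) $x*x=0$; (iii) $x*0=x$; (iv) $x*y=y*x=0$ implies $x=y$. The relation $x\leqslant y$ iff $x*y=0$ is a partial order on $X$. Let $I(X)$ be the set of minimal elements of $X$ with respect to $\leqslant$. For $a\in I(X)$ the branch initiated by $a$ is $B(a)=\{x\in X: a\leqslant x\}$; ''belonging to the same branch'' means lying in a common $B(a)$. A weak BCC-algebra is called (left) solid if $(x*y)*z=(x*z)*y$ holds for all $x,y$ belonging to the same branch and all $z\in X$. *)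

(* Defs.v *)
Definition le {X : Type} (op : X -> X -> X) (zero : X) (x y : X) : Prop :=
  op x y = zero.

Definition is_weak_BCC {X : Type} (op : X -> X -> X) (zero : X) : Prop :=
  (forall x y z, op (op (op x y) (op z y)) (op x z) = zero) /\
  (forall x, op x x = zero) /\
  (forall x, op x zero = x) /\
  (forall x y, op x y = zero -> op y x = zero -> x = y).

Definition minimal {X : Type} (op : X -> X -> X) (zero : X) (a : X) : Prop :=
  forall x, le op zero x a -> x = a.

Definition in_branch {X : Type} (op : X -> X -> X) (zero : X) (a x : X) : Prop :=
  le op zero a x.

Definition same_branch {X : Type} (op : X -> X -> X) (zero : X) (x y : X) : Prop :=
  exists a, minimal op zero a /\ in_branch op zero a x /\ in_branch op zero a y.

Definition is_solid {X : Type} (op : X -> X -> X) (zero : X) : Prop :=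
  forall x y z, same_branch op zero x y ->
    op (op x y) z = op (op x z) y.

(* Main.v *)
Require Import Defs.

Theorem lemma3p5 (X : Type) (op : X -> X -> X) (zero : X)
  (HW : is_weak_BCC op zero) (HS : is_solid op zero) :
  forall x y : X, same_branch op zero x y ->
    op x (op x (op x y)) = op x y.
Proof.
  destruct HW as [H1 [H2 [H3 H4]]].
  unfold same_branch, minimal, in_branch, le in *.
  assert (mono : forall u v t, op u v = zero -> op (op u t) (op v t) = zero).
  { intros u v t Huv. pose proof (H1 u t v) as E. rewrite Huv, H3 in E. exact E. }
  assert (anti : forall u v t, op u v = zero -> op (op t v) (op t u) = zero).
  { intros u v t Huv. pose proof (H1 t v u) as E. rewrite Huv, H3 in E. exact E. }
  intros x y [a [Ha [Hax Hay]]].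
  assert (S1 : op zero (op x y) = zero).
  { pose proof (mono a x y Hax) as E. rewrite Hay in E. exact E. }
  assert (S2 : op a (op x y) = a).
  { apply Ha. pose proof (anti zero (op x y) a S1) as E. rewrite H3 in E. exact E. }
  set (w := op x (op x y)).
  assert (S3 : op a w = zero).
  { pose proof (mono a x (op x y) Hax) as E. rewrite S2 in E. exact E. }
  assert (S4 : op w y = zero).
  { unfold w. rewrite <- (HS x y (op x y)). apply H2.
    exists a; auto. }
  assert (S5 : op (op x y) (op x w) = zero) by (apply anti; exact S4).
  assert (S6 : op (op x w) (op x y) = zero).
  { rewrite (HS x w (op x y)). fold w. apply H2. exists a; auto. }
  symmetry. apply H4; assumption.
Qed.
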